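(* Let $\{A_{1C},\dots,A_{qC}\}$ be a $PComS(n,q,c)$. Then $$\sum_{i=1}^{q}l(A_i)=\frac{nq-c}{2},\qquad \sum_{i=1}^{q}\mathcal{N}_{A_i}(R_1)=\frac{nq-c}{4},$$ and for every $k$ with $2\le k\le n-2$, $$\sum_{i=1}^{q}\mathcal{N}_{A_i}(R_k)=\sum_{i=1}^{q}\ \sum_{\substack{i_1+\cdots+i_r=k\\ 1<r\le k}}(-1)^{r}\,\mathcal{N}_{A_i}(R_{i_1}\cdots R_{i_r}),$$ where the inner sum runs over all compositions $(i_1,\dots,i_r)$ of $k$ with $r\ge2$ parts.
   Context: Sequences $X=(x_0,\dots,x_{n-1})\in\mathbb{Z}_2^n$ have entries in $\{+1,-1\}$ and are regarded as periodic (indices mod $n$). The periodic autocorrelation is $\mathsf{P}_X(k)=\sum_{i=0}^{n-1}x_ix_{i+k}$; it depends only on the cyclic-shift class $X_C$. A $PComS(n,q,c)$ is a list (repetitions allowed) of $q$ cyclic-shift classes $A_{1C},\dots,A_{qC}$ with $A_i\in\mathbb{Z}_2^n$ such that $\sum_{i=1}^q\mathsf{P}_{A_i}(k)=c$ for all $1\le k\le n-1$. A run of $X$ is a maximal block of cyclically consecutive equal entries; $l(X)=\#\{i:x_i\ne x_{i+1\bmod n}\}$ is the number of runs ($0$ for constant $X$). For positive integers $i_1,\dots,i_r$, a run string of type $R_{i_1}\cdots R_{i_r}$ is a sequence of $r$ cyclically consecutive runs of lengths $i_1,\dots,i_r$ in this order, and $\mathcal{N}_X(R_{i_1}\cdots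 R_{i_r})$ is the number of such run strings in $X$ (counted by starting run); these quantities depend only on the class $X_C$. *)

(* Defs.v *)
From mathcomp Require Import all_boot all_order all_algebra.
Set Implicit Arguments. Unset Strict Implicit. Unset Printing Implicit Defensive.
Import Order.TTheory GRing.Theory Num.Theory.
Local Open Scope ring_scope.

Definition pm1seq (n : nat) (X : seq int) : bool :=
  (size X == n) && all (fun x => (x == 1) || (x == -1)) X.

Definition xa (X : seq int) (i : nat) : int := nth 0 X (i %% size X).

Definition Pauto (X : seq int) (k : nat) : int :=
  \sum_(0 <= i < size X) xa X i * xa X (i + k).

(* PComS(n,q,c): a list of q sequences (representatives of the cyclic
   shift classes A_{iC}) in {+1,-1}^n whose autocorrelations sum to c
   at every shift 1 <= k <= n-1. *)
Definition PComS (n q : nat) (c : int) (As : seq (seq int)) : Prop :=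
  [/\ size As = q,
      all (pm1seq n) As &
      forall k : nat, (1 <= k <= n - 1)%N -> \sum_(A <- As) Pauto A k = c].

Definition nruns (X : seq int) : nat :=
  count (fun i => xa X i != xa X i.+1) (iota 0 (size X)).

Definition run_starts (X : seq int) : seq nat :=
  [seq i <- iota 0 (size X) | xa X (i + size X - 1) != xa X i].

Definition runlen (X : seq int) (t : nat) : nat :=
  let s := run_starts X in
  let m := size s in
  let t' := (t %% m)%N in
  if (t'.+1 < m)%N then (nth 0 s t'.+1 - nth 0 s t')%N
  else (nth 0 s 0 + size X - nth 0 s t')%N.

(* N_X(R_{i_1} ... R_{i_r}): number of starting runs t such that the r
   cyclically consecutive runs t, t+1, ..., t+r-1 have lengths
   i_1, ..., i_r. *)
Definition Nrs (X : seq int) (w : seq nat) : nat :=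
  count (fun t => all (fun j => runlen X (t + j) == nth 0%N w j) (iota 0 (size w)))
        (iota 0 (size (run_starts X))).

(* Main.v *)
Require Import Defs.
From mathcomp Require Import all_boot all_order all_algebra.
From mathcomp Require Import zify ring.
Import Order.TTheory GRing.Theory Num.Theory.
Set Implicit Arguments. Unset Strict Implicit. Unset Printing Implicit Defensive.
Local Open Scope ring_scope.

Definition pm (x : int) : bool := (x == 1) || (x == -1).

Lemma xa_mod X a b : (a %% size X = b %% size X)%N -> xa X a = xa X b.
Proof. by rewrite /xa => ->. Qed.

Definition bd X q := xa X (q + size X - 1) != xa X q.

Lemma bd_mod X a b : (0 < size X)%N -> (a %% size X = b %% size X)%N -> bd X a = bd X b.
Proof.
move=> hn hab; rewrite /bd; congr (_ != _); last exact: xa_mod.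
apply: xa_mod; rewrite -!addnBA // -modnDml hab modnDml //.
Qed.

Lemma xa_pm n X i : pm1seq n X -> (0 < n)%N -> pm (xa X i).
Proof.
case/andP=> /eqP hs /allP ha hn; apply: ha; rewrite /xa; apply: mem_nth.
by rewrite ltn_mod hs.
Qed.

Lemma pm_sq x : pm x -> x * x = 1.
Proof. by case/orP=> /eqP ->. Qed.

Lemma pm_neq x y : pm x -> pm y -> (nat_of_bool (x != y))%:Z * 2 = 1 - x * y.
Proof. by case/orP=> /eqP -> /orP [] /eqP ->. Qed.

Lemma pm_opp x y : pm x -> pm y -> x != y -> y = - x.
Proof. by case/orP=> /eqP -> /orP [] /eqP ->. Qed.

Lemma term4 x x' y z : pm x -> pm x' -> pm y -> pm z ->
 4 * ((nat_of_bool (y != x))%:Z * ((nat_of_bool (z != x'))%:Z * (x * x'))) =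
   x * x' - y * x' - z * x + y * z.
Proof.
by case/orP=> /eqP -> /orP [] /eqP -> /orP [] /eqP -> /orP [] /eqP ->.
Qed.

Lemma sum_shift (n a : nat) (F : nat -> int) : (forall i, F (i + n)%N = F i) ->
  \sum_(0 <= i < n) F (i + a)%N = \sum_(0 <= i < n) F i.
Proof.
move=> hF; elim: a => [|a IH]; first by apply: eq_bigr => i _; rewrite addn0.
rewrite -IH.
have e : F (0 + a)%N + \sum_(0 <= i < n) F (i.+1 + a)%N =
         \sum_(0 <= i < n) F (i + a)%N + F (n + a)%N.
  by rewrite -(big_nat_recl _ _ (fun i => F (i + a)%N)) // -big_nat_recr.
have hn : F (n + a)%N = F (0 + a)%N by rewrite add0n addnC hF.
rewrite hn addrC in e.
have := addIr _ e => <-; apply: eq_bigr => i _; by rewrite addSnnS.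
Qed.

Definition G X k p : int := (nat_of_bool (bd X (p + k)%N))%:Z * (xa X p * xa X (p + k)%N).

Lemma alg X n k : pm1seq n X -> (0 < n)%N -> (0 < k)%N ->
  4 * \sum_(0 <= p < n) (nat_of_bool (bd X p))%:Z * G X k p =
  2 * Pauto X k - Pauto X k.+1 - Pauto X k.-1.
Proof.
move=> hX hn hk; have hs : size X = n by case/andP: hX => /eqP.
have pmx i : pm (xa X i) by exact: xa_pm hX hn.
rewrite mulr_sumr.
under eq_bigr => p _ do rewrite /G /bd mulrA -(mulrA 4) term4 //.
rewrite !big_split /= !sumrN.
have S1 : \sum_(0 <= i < n) xa X i * xa X (i + k) = Pauto X k by rewrite /Pauto hs.
have S2 : \sum_(0 <= i < n) xa X (i + size X - 1) * xa X (i + k) = Pauto X k.+1.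
  rewrite /Pauto hs -(@sum_shift n (n.-1) (fun i => xa X i * xa X (i + k.+1))).
    apply: eq_bigr => i _; congr (_ * _); apply: xa_mod; rewrite hs; first by congr (_ %% _)%N; lia.
    have -> : (i + n.-1 + k.+1 = (i + k) + n)%N by lia.
    by rewrite modnDr.
  by move=> i; congr (_ * _); apply: xa_mod; rewrite hs; [|have -> : (i + n + k.+1 = (i + k.+1) + n)%N by lia]; rewrite modnDr.
have S3 : \sum_(0 <= i < n) xa X (i + k + size X - 1) * xa X i = Pauto X k.-1.
  rewrite /Pauto hs; apply: eq_bigr => i _; rewrite mulrC; congr (_ * _); apply: xa_mod.
  rewrite hs; have -> : (i + k + n - 1 = (i + k.-1) + n)%N by lia.
  by rewrite modnDr.
have S4 : \sum_(0 <= i < n) xa X (i + size X - 1) * xa X (i + k + size X - 1) = Pauto X k.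
  rewrite /Pauto hs -(@sum_shift n (n.-1) (fun i => xa X i * xa X (i + k))).
    apply: eq_bigr => i _; congr (_ * _); apply: xa_mod; rewrite hs; congr (_ %% _)%N; lia.
  by move=> i; congr (_ * _); apply: xa_mod; rewrite hs; [|have -> : (i + n + k = (i + k) + n)%N by lia]; rewrite modnDr.
rewrite S1 S2 S3 S4; ring.
Qed.
Local Open Scope nat_scope.

Lemma rs_def X : run_starts X = [seq i <- iota 0 (size X) | bd X i].
Proof. by []. Qed.

Lemma rs_sorted X : sorted ltn (run_starts X).
Proof. exact: sorted_filter ltn_trans _ _ (iota_ltn_sorted 0 _). Qed.

Lemma rs_mem X q : (q \in run_starts X) = (q < size X)%N && bd X q.
Proof. by rewrite rs_def mem_filter mem_iota add0n andbC. Qed.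

Lemma rs_nth X t : (t < size (run_starts X))%N ->
  (nth 0 (run_starts X) t < size X)%N /\ bd X (nth 0 (run_starts X) t).
Proof. by move=> ht; move: (mem_nth 0 ht); rewrite rs_mem => /andP. Qed.

Lemma rs_idx X i j : (i < size (run_starts X))%N -> (j < size (run_starts X))%N ->
  (nth 0 (run_starts X) i < nth 0 (run_starts X) j)%N -> (i < j)%N.
Proof.
move=> hi hj hlt; case: (ltnP i j) => // hji.
have hs : sorted leq (run_starts X) by apply: sub_sorted (rs_sorted X) => a b /ltnW.
have := sorted_leq_nth leq_trans leqnn 0%N hs; move=> /(_ j i); rewrite !inE => /(_ hj hi hji); lia.
Qed.

Lemma rs_find X q : (q < size X)%N -> bd X q ->
  exists j, (j < size (run_starts X))%N /\ nth 0 (run_starts X) j = q.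
Proof.
move=> hq hb; have hin : q \in run_starts X by rewrite rs_mem hq.
by exists (index q (run_starts X)); rewrite index_mem nth_index.
Qed.

Lemma rs_lt X i j : (i < j)%N -> (j < size (run_starts X))%N ->
  (nth 0 (run_starts X) i < nth 0 (run_starts X) j)%N.
Proof.
move=> hij hj; have := sorted_ltn_nth ltn_trans 0%N (rs_sorted X); move=> /(_ i j); rewrite !inE; apply => //; lia.
Qed.

Lemma rl_props X t : (0 < size X)%N -> (t < size (run_starts X))%N ->
  [/\ (0 < runlen X t)%N,
      (forall d, (0 < d < runlen X t)%N -> ~~ bd X (nth 0 (run_starts X) t + d)) &
      ((nth 0 (run_starts X) t + runlen X t) %% size X =
         nth 0 (run_starts X) (t.+1 %% size (run_starts X)))%N].
Proof.
move=> hn ht; 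
rewrite /runlen (modn_small ht).
have [ha hba] := rs_nth ht.
case: ifP => hlt.
- have [hb hbb] := rs_nth hlt.
  have hab := rs_lt (ltnSn t) hlt.
  split; first lia.
  + move=> d hd; apply/negP => hbd.
    have hq : (nth 0 (run_starts X) t + d < size X)%N by lia.
    have [j [hj ej]] := rs_find hq hbd.
    have h1 : (t < j)%N by apply: (@rs_idx X) => //; rewrite ej; lia.
    have h2 : (j < t.+1)%N by apply: (@rs_idx X) => //; rewrite ej; lia.
    lia.
  + rewrite (modn_small hlt); have -> : (nth 0 (run_starts X) t + (nth 0 (run_starts X) t.+1 - nth 0 (run_starts X) t) = nth 0 (run_starts X) t.+1)%N by lia.
    by rewrite modn_small.
- have hm : (t.+1 = size (run_starts X))%N by lia.
  have hm0 : (0 < size (run_starts X))%N by lia.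
  have [h0 hb0] := rs_nth hm0.
  split; first lia.
  + move=> d hd; apply/negP => hbd.
    case: (ltnP (nth 0 (run_starts X) t + d) (size X)) => hq.
    * have [j [hj ej]] := rs_find hq hbd.
      have h1 : (t < j)%N by apply: (@rs_idx X) => //; rewrite ej; lia.
      lia.
    * have e : bd X (nth 0 (run_starts X) t + d) = bd X (nth 0 (run_starts X) t + d - size X).
        apply: bd_mod => //; rewrite -{1}(subnK hq) modnDr //.
      rewrite e in hbd.
      have hq' : (nth 0 (run_starts X) t + d - size X < size X)%N by lia.
      have [j [hj ej]] := rs_find hq' hbd.
      have h1 : (j < 0)%N by apply: (@rs_idx X) => //; rewrite ej; lia.
      lia.
  + rewrite hm modnn; have -> : (nth 0 (run_starts X) t + (nth 0 (run_starts X) 0 + size X - nth 0 (run_starts X) t) = nth 0 (run_starts X) 0 + size X)%N by lia.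
    by rewrite modnDr modn_small.
Qed.

Definition psum X u r := \sum_(j < r) runlen X (u + j).

Lemma runlen_mod X u : runlen X u = runlen X (u %% size (run_starts X)).
Proof. by rewrite /runlen modn_mod. Qed.

Lemma runlen_pos X u : 0 < size X -> 0 < size (run_starts X) -> 0 < runlen X u.
Proof.
move=> hn hm; rewrite runlen_mod.
by have [] := rl_props hn (ltn_pmod u hm).
Qed.

Lemma psum_ge X u r : 0 < size X -> 0 < size (run_starts X) -> r <= psum X u r.
Proof.
move=> hn hm; rewrite /psum.
have := @leq_sum _ (index_enum 'I_r) xpredT (fun _ => 1) (fun j : 'I_r => runlen X (u + j)).
rewrite sum_nat_const card_ord muln1; apply => j _; exact: runlen_pos.
Qed.

Lemma psum0 X u : psum X u 0 = 0.
Proof. by rewrite /psum big_ord0. Qed.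

Lemma psumS X u r : psum X u r.+1 = runlen X u + psum X u.+1 r.
Proof.
rewrite /psum big_ord_recl addn0; congr (_ + _); apply: eq_bigr => j _.
by rewrite lift0 addnS addSn.
Qed.


Definition Hs X K k u : int :=
  (\sum_(1 <= r < K) (-1) ^+ r * (nat_of_bool (psum X u r == k))%:Z)%R.

Lemma xa_const n X p rl : pm1seq n X -> (0 < n)%N ->
  (forall d, (0 < d < rl)%N -> ~~ bd X (p + d)) ->
  forall d, (d < rl)%N -> xa X (p + d) = xa X p.
Proof.
move=> hX hn hnb; have hs : size X = n by case/andP: hX => /eqP.
elim=> [|d IH] hd; first by rewrite addn0.
have := hnb d.+1; rewrite /= hd => /(_ isT); rewrite /bd negbK => /eqP <-.
rewrite -IH; last by apply: ltnW.
apply: xa_mod; rewrite hs; have -> : (p + d.+1 + n - 1 = p + d + n)%N by lia.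
by rewrite modnDr.
Qed.

Lemma arith1 p n r : 0 < r -> (p + r + n - 1) %% n = (p + r.-1) %% n.
Proof.
move=> hr; have -> : (p + r + n - 1 = (p + r.-1) + n)%N by lia.
by rewrite modnDr.
Qed.

Lemma Hs_G n X : pm1seq n X -> (0 < n)%N -> (0 < size (run_starts X))%N ->
  forall k, (0 < k)%N -> forall K u, (k < K)%N ->
  Hs X K k u = G X k (nth 0%N (run_starts X) (u %% size (run_starts X))).
Proof.
move=> hX hn hm; have hs : size X = n by case/andP: hX => /eqP.
have hn' : (0 < size X)%N by rewrite hs.
have pmx i : pm (xa X i) by exact: xa_pm hX hn.
elim/ltn_ind=> k IH hk [|K] u hK //.
have hK1 : (1 <= K)%N by lia.
rewrite /Hs big_nat_recl //.
have e1 : psum X u 1 = runlen X u by rewrite psumS psum0 addn0.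
rewrite e1; under eq_bigr => r _ do rewrite psumS.
set t := (u %% size (run_starts X))%N.
have ht : (t < size (run_starts X))%N by apply: ltn_pmod.
have [hpos hnb hnext] := rl_props hn' ht.
rewrite (runlen_mod X u) -/t.
set rl := runlen X t in hpos hnb hnext *.
set p := nth 0%N (run_starts X) t in hnb hnext *.
have hbp : bd X p by have [] := rs_nth ht.
have hc := xa_const hX hn hnb.
case: (ltngtP k rl) => hkrl.
-   rewrite big1; last by move=> r _; rewrite (_ : rl + psum X u.+1 r == k = false) ?mulr0 //; apply/negbTE; lia.
  rewrite /G (negbTE (hnb k _)) //; last by rewrite hk.
  by rewrite !mulr0 mul0r addr0.
-   set k' := (k - rl)%N.
  have hk' : (k' < k)%N by lia.
  have hk'0 : (0 < k')%N by lia.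
  have := IH k' hk' hk'0 K u.+1 (_ : (k' < K)%N); rewrite /Hs => IH'.
  have e2 : (\sum_(1 <= i < K) (-1) ^+ i.+1 * (nat_of_bool (rl + psum X u.+1 i == k))%:Z =
            - \sum_(1 <= i < K) (-1) ^+ i * (nat_of_bool (psum X u.+1 i == k'))%:Z)%R.
    rewrite -sumrN; apply: eq_bigr => i _.
    rewrite exprS mulN1r mulNr; congr (- (_ * _)); congr ((nat_of_bool _)%:Z).
    apply/idP/idP => /eqP h; apply/eqP; lia.
  rewrite e2 IH'; last by lia.
  rewrite mulr0 add0r.
  have ht1 : ((u.+1) %% size (run_starts X) = t.+1 %% size (run_starts X))%N.
    by rewrite /t -[in RHS]addn1 modnDml addn1.
  rewrite ht1 -hnext /G.
  set p' := ((p + rl) %% size X)%N.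
  have eqk : ((p + k) %% size X = (p' + k') %% size X)%N.
    by rewrite /p' modnDml /k' -addnA subnKC //; apply: ltnW.
  rewrite (bd_mod hn' eqk) (xa_mod eqk).
  have ep' : xa X p' = (- xa X p)%R.
    have -> : xa X p' = xa X (p + rl) by apply: xa_mod; rewrite /p' modn_mod.
    have hb : bd X (p + rl).
      have [_ hb'] := rs_nth (ltn_pmod t.+1 hm).
      by rewrite (bd_mod hn' (esym (modn_mod (p + rl) (size X)))) hnext.
    move: hb; rewrite /bd => hb.
    rewrite (xa_mod (arith1 p (size X) hpos)) in hb.
    rewrite hc in hb; last by move: hpos; clear; lia.
    by rewrite (pm_opp (pmx _) (pmx _) hb).
  rewrite ep'; ring.
- rewrite ?eqxx.
  rewrite big1_seq; last first.
    move=> r /andP [_]; rewrite mem_index_iota => /andP [hr _].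
    have hge := psum_ge u.+1 r hn' hm.
    rewrite (_ : (_ + psum X u.+1 r == _) = false) ?mulr0 //; apply/negbTE; move: hge hr hkrl; clear; lia.
  rewrite /G.
  have hb : bd X (p + k).
    have [_ hb'] := rs_nth (ltn_pmod t.+1 hm).
    by rewrite (bd_mod hn' (esym (modn_mod (p + k) (size X)))) hkrl hnext.
  rewrite hb.
  move: hb; rewrite /bd => hb.
  rewrite (xa_mod (arith1 p (size X) hk)) in hb.
  rewrite hc in hb; last by move: hk hkrl; clear; lia.
  rewrite (pm_opp (pmx _) (pmx _) hb) mulrN pm_sq //; by rewrite ?expr1 ?mulN1r ?mul1r ?addr0.
Qed.

Lemma count_sum (T : Type) (a : pred T) (s : seq T) :
  (count a s)%:Z = (\sum_(x <- s) (nat_of_bool (a x))%:Z)%R.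
Proof. by elim: s => [|x s IH]; rewrite ?big_nil ?big_cons //= PoszD IH. Qed.

Lemma sumH n X k : pm1seq n X -> 0 < n -> 0 < k ->
  (\sum_(u <- iota 0 (size (run_starts X))) Hs X k.+1 k u =
   \sum_(0 <= p < n) (nat_of_bool (bd X p))%:Z * G X k p)%R.
Proof.
move=> hX hn hk; have hs : size X = n by case/andP: hX => /eqP.
case: (posnP (size (run_starts X))) => hm.
- rewrite hm big_nil; symmetry; rewrite big_nat_cond big1 // => p /andP [/andP [_ hp] _].
  case hb: (bd X p) => /=; last by rewrite mul0r.
  have : p \in run_starts X by rewrite rs_mem hs hp hb.
  by move/size0nil: hm => ->.
- rewrite (eq_big_seq (fun u => G X k (nth 0%N (run_starts X) u))); last first.
    move=> u; rewrite mem_iota add0n => /andP [_ hu].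
    by rewrite (Hs_G hX hn hm hk) // modn_small.
  have -> : (\sum_(0 <= p < n) (nat_of_bool (bd X p))%:Z * G X k p =
             \sum_(p <- run_starts X) G X k p)%R.
    rewrite rs_def big_filter [RHS]big_mkcond hs /index_iota subn0; apply: eq_bigr => p _.
    by case: (bd X p) => /=; rewrite ?mul1r ?mul0r.
  by rewrite [RHS](big_nth 0%N) /index_iota subn0.
Qed.

Definition mt X u (w : seq nat) :=
  all (fun j => runlen X (u + j) == nth 0 w j) (iota 0 (size w)).

Lemma mtP X u w : reflect (forall j, j < size w -> runlen X (u + j) = nth 0 w j) (mt X u w).
Proof.
apply: (iffP allP) => h j.
- by move=> hj; apply/eqP/h; rewrite mem_iota.
- by rewrite mem_iota => /andP [_ hj]; apply/eqP/h.
Qed.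

Lemma sum_tuple_val k r (t : r.-tuple 'I_k.+1) :
  \sum_(i <- t) (i : nat) = \sum_(j < r) nth 0 (map (fun i : 'I_k.+1 => (i : nat)) t) j.
Proof.
rewrite -(big_map (fun i : 'I_k.+1 => (i : nat)) xpredT (fun x => x)).
by rewrite (big_nth 0) size_map size_tuple big_mkord.
Qed.

Lemma tuple_count X k r u : (forall j, 0 < runlen X j) ->
  (\sum_(t : r.-tuple 'I_k.+1 |
          all (fun i : 'I_k.+1 => (0 < i)%N) t && (\sum_(i <- t) (i : nat) == k)%N)
     (nat_of_bool (mt X u (map (fun i : 'I_k.+1 => (i : nat)) t)))%:Z =
   (nat_of_bool (psum X u r == k))%:Z)%R.
Proof.
move=> hpos.
case: (boolP (psum X u r == k)) => hps /=.
- have hle : forall j, j < r -> runlen X (u + j) <= k.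
    move=> j hj; rewrite -(eqP hps) /psum (bigD1 (Ordinal hj)) //=; exact: leq_addr.
  set t0 : r.-tuple 'I_k.+1 := [tuple (inord (runlen X (u + j)) : 'I_k.+1) | j < r].
  have tt0 : forall j : 'I_r, (tnth t0 j : nat) = runlen X (u + j).
    by move=> j; rewrite tnth_mktuple inordK // ltnS hle.
  have ht0 : forall j, j < r -> nth 0 (map (fun i : 'I_k.+1 => (i : nat)) t0) j = runlen X (u + j).
    move=> j hj; rewrite (nth_map ord0) ?size_tuple //.
    by rewrite -(tnth_nth ord0 t0 (Ordinal hj)) tt0.
  have mt0 : mt X u (map (fun i : 'I_k.+1 => (i : nat)) t0).
    by apply/mtP => j; rewrite size_map size_tuple => hj; rewrite ht0.
  have P0 : all (fun i : 'I_k.+1 => (0 < i)%N) t0 && (\sum_(i <- t0) (i : nat) == k)%N.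
    apply/andP; split.
      by apply/all_tnthP => j /=; rewrite tt0.
    rewrite sum_tuple_val; apply/eqP; rewrite -[RHS](eqP hps) /psum; apply: eq_bigr => j _.
    by rewrite ht0.
  rewrite (bigD1 t0) //= mt0 big1 ?addr0 //.
  move=> t /andP [_ hne]; case: (boolP (mt _ _ _)) => //= hmt.
  exfalso; move/eqP: hne; apply.
  apply: eq_from_tnth => j; apply: val_inj => /=.
  rewrite tt0; have := (elimT (mtP X u _) hmt) j; rewrite size_map size_tuple => /(_ (ltn_ord j)) ->.
  by rewrite (nth_map ord0) ?size_tuple // -tnth_nth.
- rewrite big1 // => t /andP [_ hsum]; case: (boolP (mt _ _ _)) => //= hmt.
  exfalso; move/negP: hps; apply.
  rewrite -(eqP hsum) sum_tuple_val /psum; apply/eqP; apply: eq_bigr => j _.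
  have := (elimT (mtP X u _) hmt) j; rewrite size_map size_tuple => /(_ (ltn_ord j)) //.
Qed.

Lemma Nrs_sum X w : (Nrs X w)%:Z =
  (\sum_(u <- iota 0 (size (run_starts X))) (nat_of_bool (mt X u w))%:Z)%R.
Proof. exact: count_sum. Qed.

Lemma Nrs1 X k : (Nrs X [:: k])%:Z =
  (\sum_(u <- iota 0 (size (run_starts X))) (nat_of_bool (runlen X u == k))%:Z)%R.
Proof.
rewrite Nrs_sum; apply: eq_bigr => u _; by rewrite /mt /= addn0 andbT.
Qed.

Definition TT X k : int :=
  (\sum_(2 <= r < k.+1)
     \sum_(t : r.-tuple 'I_k.+1 |
             all (fun i : 'I_k.+1 => (0 < i)%N) t &&
             (\sum_(i <- t) (i : nat) == k)%N)
        (-1) ^+ r * (Nrs X (map (fun i : 'I_k.+1 => (i : nat)) t))%:Z)%R.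

Lemma per X n k : pm1seq n X -> 0 < n -> 0 < k ->
  (4 * (- (Nrs X [:: k])%:Z + TT X k) = 2 * Pauto X k - Pauto X k.+1 - Pauto X k.-1)%R.
Proof.
move=> hX hn hk; rewrite -(alg hX hn hk) -(sumH hX hn hk); congr (_ * _)%R.
have hs : size X = n by case/andP: hX => /eqP.
rewrite /Hs.
under eq_bigr => u _ do rewrite big_ltn // expr1 mulN1r psumS psum0 addn0.
rewrite big_split /= sumrN Nrs1; congr (_ + _)%R.
case: (posnP (size (run_starts X))) => hm.
- rewrite hm big_nil /TT big1 // => r _; rewrite big1 // => t _.
  by rewrite /Nrs hm /= mulr0.
- have hpos : forall j, 0 < runlen X j by move=> j; apply: runlen_pos => //; rewrite hs.
  rewrite /TT.
  rewrite [RHS]exchange_big /=; apply: eq_bigr => r _.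
  rewrite (eq_bigr (fun t : r.-tuple 'I_k.+1 => \sum_(u <- iota 0 (size (run_starts X)))
      (-1) ^+ r * (nat_of_bool (mt X u (map (fun i : 'I_k.+1 => (i : nat)) t)))%:Z))%R; last first.
    by move=> t _; rewrite Nrs_sum mulr_sumr.
  rewrite exchange_big /=; apply: eq_bigr => u _.
  by rewrite -mulr_sumr tuple_count.
Qed.

Lemma Pauto0 n X : pm1seq n X -> 0 < n -> Pauto X 0 = n%:Z.
Proof.
move=> hX hn; have hs : size X = n by case/andP: hX => /eqP.
rewrite /Pauto (eq_bigr (fun _ => (1 : int))%R); last by move=> i _; rewrite addn0 pm_sq // (xa_pm _ hX hn).
rewrite big_const_nat iter_addr_0 hs subn0 natz //.
Qed.

Lemma nrunsP n X : pm1seq n X -> 0 < n -> (2 * (nruns X)%:Z = n%:Z - Pauto X 1)%R.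
Proof.
move=> hX hn; have hs : size X = n by case/andP: hX => /eqP.
rewrite /nruns count_sum mulr_sumr /Pauto hs /index_iota subn0.
rewrite (eq_bigr (fun i => 1 - xa X i * xa X (i + 1))%R); last first.
  move=> i _; rewrite mulrC pm_neq ?addn1 //; exact: (xa_pm _ hX hn).
by rewrite sumrB big_const_seq count_predT size_iota iter_addr_0 natz.
Qed.

Local Open Scope ring_scope.

Theorem theorem7 (n q : nat) (c : int) (As : seq (seq int)) :
  (3 <= n)%N -> PComS n q c As ->
  [/\ 2 * (\sum_(A <- As) (nruns A)%:Z) = (n * q)%:Z - c,
      4 * (\sum_(A <- As) (Nrs A [:: 1%N])%:Z) = (n * q)%:Z - c &
      forall k : nat, (2 <= k <= n - 2)%N ->
        \sum_(A <- As) (Nrs A [:: k])%:Z =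
        \sum_(A <- As) \sum_(2 <= r < k.+1)
           \sum_(t : r.-tuple 'I_k.+1 |
                   all (fun i : 'I_k.+1 => (0 < i)%N) t &&
                   (\sum_(i <- t) (i : nat) == k)%N)
              (-1) ^+ r * (Nrs A (map (fun i : 'I_k.+1 => (i : nat)) t))%:Z].
Proof.
move=> hn3 [hq hall hc].
have hn : (0 < n)%N by lia.
have pmA : forall A, A \in As -> pm1seq n A by move=> A hA; exact: (allP hall A hA).
have sumn : \sum_(A <- As) (n%:Z) = (n * q)%:Z.
  rewrite big_const_seq count_predT iter_addr_0 -hq.
  by elim: (size As) => [|m IH]; rewrite ?mulr0n ?muln0 // mulrS IH mulnS PoszD.
have c1 : \sum_(A <- As) Pauto A 1 = c by apply: hc; lia.
have c2 : \sum_(A <- As) Pauto A 2 = c by apply: hc; lia.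
split.
- rewrite mulr_sumr (eq_big_seq (fun A => n%:Z - Pauto A 1)); last first.
    by move=> A hA; rewrite (nrunsP (pmA A hA) hn).
  by rewrite sumrB sumn c1.
- rewrite mulr_sumr (eq_big_seq (fun A => n%:Z - 2 * Pauto A 1 + Pauto A 2)); last first.
    move=> A hA; have := per (pmA A hA) hn (isT : (0 < 1)%N).
    rewrite (Pauto0 (pmA A hA) hn) /TT big_geq // addr0 => h /=; lia.
  rewrite big_split sumrB -mulr_sumr sumn c1 c2 /=; lia.
- move=> k hk.
  have h0 : \sum_(A <- As) 4 * (- (Nrs A [:: k])%:Z + TT A k) = 0.
    rewrite (eq_big_seq (fun A => 2 * Pauto A k - Pauto A k.+1 - Pauto A k.-1)); last first.
      by move=> A hA; rewrite (per (pmA A hA) hn) //; lia.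
    rewrite !sumrB -mulr_sumr !hc; try lia.
  rewrite -mulr_sumr big_split sumrN /= in h0.
  change (\sum_(A <- As) (Nrs A [:: k])%:Z = \sum_(A <- As) TT A k).
  move/eqP: h0; rewrite mulf_eq0 /= => /eqP h.
  by apply/eqP; rewrite eq_sym -subr_eq0 addrC h.
Qed.
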